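(* Let $Q$ be a finite connected quandle isomorphic to a generalized Alexander quandle $\mathrm{GAlex}(G_0,f)$ for some finite group $G_0$ and $f\in\mathrm{Aut}(G_0)$. Let $e\in Q$, $G=\mathrm{Inn}(Q)$, $x=R_e$. Then for every oriented knot $K$, $$\Psi^e_Q(K)=(\pi_e)_*\big(P^x_G(K)\big),$$ where $(\pi_e)_*:\mathbb{Z}[C(x)\cap G']\to\mathbb{Z}[\mathrm{inn}^{-1}(R_e)]$ is the $\mathbb{Z}$-linear map induced by the bijection $\pi_e(g)=eg$. Consequently $P^x_G$ and $\Psi^e_Q$ distinguish the same pairs of knots.
   Context: A quandle is a set with operation $*$ satisfying $a*a=a$; unique right division; $(a*b)*c=(a*c)*(b*c)$. $R_a(y)=y*a$; $\mathrm{Inn}(Q)$ is generated by the $R_a$ and acts on $Q$ on the right ($ag$ is the image of $a$ under $g$); connected means transitive; $\mathrm{inn}(a)=R_a$. $\mathrm{GAlex}(H,f)$ is the quandle on a group $H$ with $a*b=f(ab^{-1})b$. $G'$ is the derived subgroup, $C(x)$ the centralizer of $x$ in $G$; $\pi_e:C(x)\cap G'\to\mathrm{inn}^{-1}(R_e)$ is a bijection in this setting. Colorings: arcs of an oriented diagram get colors in $Q$ so that at each crossing with over-arc color $y$ and incoming under-arc color $a$ the outgoing under-arc gets $a*y$. For a $1$-tangle $T$ (oriented arc in a 3-ball up to isotopy rel boundary, drawn top to bottom, top arc $b_0$, bottom arc $b_1$) with closure $K$, $\Psi^e_Q(K)=\sum C(b_1)\in\mathbb{Z}[\mathrm{inn}^{-1}(R_e)]$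 over colorings $C$ of $T$ with $C(b_0)=e$. Eisermann's knot coloring polynomial: with $\pi_K$ the fundamental group of the knot complement, $m_K$ a meridian and $l_K$ the corresponding longitude (Eisermann's conventions), $P^x_G(K)=\sum_\rho\rho(l_K)$, summed over all homomorphisms $\rho:\pi_K\to G$ with $\rho(m_K)=x$; the values $\rho(l_K)$ lie in $C(x)\cap G'$, so $P^x_G(K)\in\mathbb{Z}[C(x)\cap G']$. *)

(* Defs.v *)
From HB Require Import structures.
From mathcomp Require Import all_boot all_algebra all_fingroup all_solvable.
Set Implicit Arguments.
Unset Strict Implicit.
Unset Printing Implicit Defensive.

(* a*a = a ; right multiplication injective (= bijective, i.e. unique right
   division, since the carrier is finite) ; right self-distributivity. *)
Record quandle := Quandle {
  qcar :> finType;
  qop : qcar -> qcar -> qcar;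
  qidem : forall a, qop a a = a;
  qinj : forall b, injective (fun a => qop a b);
  qdist : forall a b c, qop (qop a b) c = qop (qop a c) (qop b c) }.

Local Open Scope group_scope.

Section QuandleDefs.
Variable Q : quandle.

(* R_a(y) = y * a, as a permutation of Q (mathcomp permutations act on the
   right: (s * t) y = t (s y)). *)
Definition Rq (a : Q) : {perm Q} := perm (@qinj Q a).

Definition Inn : {group {perm Q}} := <<[set Rq a | a : Q]>>%G.

Definition qrdiv (a b : Q) : Q := (Rq b)^-1 a.

Definition qconnected : bool := [transitive Inn, on [set: Q] | 'P].
End QuandleDefs.

(* A braid word on n.+1 strands (positions 0..n, read top to bottom):
   a crossing (i, true) exchanges positions i and i+1, the strand coming from
   position i passing OVER (to position i+1); (i, false) is its inverse: the
   strand coming from position i+1 passes over (to position i). *)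
Definition crossing := (nat * bool)%type.

Definition valid_braid (n : nat) (w : seq crossing) : bool :=
  all (fun s => s.1 < n) w.

Definition swap_pos (i k : nat) : nat :=
  if k == i then i.+1 else if k == i.+1 then i else k.

(* the strand entering at top position k leaves at bottom position bperm w k *)
Definition bperm (w : seq crossing) (k : nat) : nat :=
  foldl (fun k s => swap_pos s.1 k) k w.

Definition is_knot_braid (n : nat) (w : seq crossing) : bool :=
  valid_braid n w && uniq [seq iter k (bperm w) 0 | k <- iota 0 n.+1].

(* over-arc colour y, incoming under-arc colour a: outgoing a * y, resp. a / y
   for the crossing of the opposite handedness (so that Reidemeister II holds). *)
Definition qstep (Q : quandle) (c : nat -> Q) (s : crossing) : nat -> Q :=
  let i := s.1 in
  if s.2 then fun k => if k == i then qop (c i.+1) (c i)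
                       else if k == i.+1 then c i else c k
  else fun k => if k == i then c i.+1
                else if k == i.+1 then qrdiv (c i) (c i.+1) else c k.

Definition qrun (Q : quandle) (w : seq crossing) (c : nat -> Q) : nat -> Q :=
  foldl (@qstep Q) c w.

(* Coefficient of q in Psi^e_Q(K), K = closure of w; the 1-tangle is obtained by
   cutting the closing arc at position 0: top arc b_0 = top of position 0,
   bottom arc b_1 = bottom of position 0. *)
Definition Psi_coeff (Q : quandle) (n : nat) (w : seq crossing) (e q : Q) : nat :=
  #|[set c : {ffun 'I_n.+1 -> Q} |
      [&& c ord0 == e,
          [forall j : 'I_n.+1, (j != ord0) ==>
               (qrun w (fun k => c (inord k)) j == c j)] &
          qrun w (fun k => c (inord k)) 0 == q]]|.

(* colours of arcs in a group, together with the product of the over-arc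
   colours (with signs) accumulated along each strand since its top. *)
Section GroupColorings.
Variable gT : finGroupType.

Definition gstep (c : nat -> gT * gT) (s : crossing) : nat -> gT * gT :=
  let i := s.1 in
  if s.2 then fun k => if k == i then ((c i.+1).1 ^ (c i).1, (c i.+1).2 * (c i).1)
                       else if k == i.+1 then c i else c k
  else fun k => if k == i then c i.+1
                else if k == i.+1 then ((c i).1 ^ ((c i.+1).1)^-1,
                                        (c i).2 * ((c i.+1).1)^-1)
                else c k.

Definition grun (w : seq crossing) (c : nat -> gT * gT) : nat -> gT * gT :=
  foldl gstep c w.

Definition ginit (n : nat) (c : {ffun 'I_n.+1 -> gT}) : nat -> gT * gT :=
  fun k => (c (inord k), 1).

(* c : arcs at the top of the braid -> G determines a homomorphism
   pi_K -> G with meridian (arc at top of position 0) |-> x iff all Wirtinger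
   relations of the closed diagram hold. *)
Definition is_Gcol (G : {set gT}) (x : gT) (n : nat) (w : seq crossing)
    (c : {ffun 'I_n.+1 -> gT}) : bool :=
  [&& c ord0 == x, [forall j, c j \in G] &
      [forall j : 'I_n.+1, ((grun w (ginit c)) j).1 == c j]].

(* image of the (preferred, linking-number 0) longitude: product of the signed
   over-arc colours met travelling once around the knot from the top of
   position 0, corrected by the meridian power minus the writhe. *)
Definition longitude (x : gT) (n : nat) (w : seq crossing)
    (c : {ffun 'I_n.+1 -> gT}) : gT :=
  let out := grun w (ginit c) in
  (\prod_(k < n.+1) (out (iter k.+1 (bperm w) 0)).2)
    * x ^+ count (fun s => ~~ s.2) w * x ^- count (fun s => s.2) w.

(* coefficient of g in P^x_G(K) = #{rho : rho(m_K) = x, rho(l_K) = g} *)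
Definition Pcoeff (G : {set gT}) (x : gT) (n : nat) (w : seq crossing) (g : gT)
  : nat :=
  #|[set c : {ffun 'I_n.+1 -> gT} | is_Gcol G x w c && (longitude x w c == g)]|.
End GroupColorings.

(* Main.v *)
Require Import Defs.
From HB Require Import structures.
From mathcomp Require Import all_boot all_algebra all_fingroup all_solvable.
From mathcomp Require Import zify.
Set Implicit Arguments. Unset Strict Implicit. Unset Printing Implicit Defensive.
Local Open Scope group_scope.

Lemma swap_pos_i i : swap_pos i i = i.+1.
Proof. by rewrite /swap_pos eqxx. Qed.
Lemma swap_pos_Si i : swap_pos i i.+1 = i.
Proof. by rewrite /swap_pos (gtn_eqF (ltnSn i)) eqxx. Qed.
Lemma swap_pos_o i k : k != i -> k != i.+1 -> swap_pos i k = k.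
Proof. by rewrite /swap_pos => /negbTE -> /negbTE ->. Qed.
Lemma swap_posK i : involutive (swap_pos i).
Proof.
move=> k; have [->|ki] := eqVneq k i; first by rewrite swap_pos_i swap_pos_Si.
have [->|kSi] := eqVneq k i.+1; first by rewrite swap_pos_Si swap_pos_i.
by rewrite !swap_pos_o.
Qed.

Fixpoint orev {T} (w : seq crossing) (o : nat -> T) : nat -> T :=
  if w is s :: w' then orev w' (fun k => o (swap_pos s.1 k)) else o.

Lemma bperm_cons s w k : bperm (s :: w) k = bperm w (swap_pos s.1 k).
Proof. by []. Qed.

Lemma orev_bperm T w (o : nat -> T) k : orev w o (bperm w k) = o k.
Proof. by elim: w o k => // s w IH o k; rewrite bperm_cons /= IH swap_posK. Qed.

Lemma bperm_inj w : injective (bperm w).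
Proof. by move=> a b E; rewrite -(orev_bperm w id a) E orev_bperm. Qed.

Lemma bperm_le n w k : valid_braid n w -> k <= n -> bperm w k <= n.
Proof.
elim: w k => // [[i b] w IH] k; rewrite bperm_cons /= => /andP[lin vw] kn.
apply: IH => //; rewrite /swap_pos; case: ifP => _; first exact: lin.
by case: ifP => // _; exact: ltnW.
Qed.

Ltac casek k i ki kSi := case: (eqVneq k i) => [?|ki];
  [subst k; rewrite ?eqxx ?swap_pos_i /= |
   case: (eqVneq k i.+1) => [?|kSi]; [subst k|];
   [rewrite ?eqxx ?(gtn_eqF (ltnSn i)) ?swap_pos_Si /=
   | rewrite ?(negbTE ki) ?(negbTE kSi) ?swap_pos_o //=]].

Section GSide.
Variable gT : finGroupType.
Implicit Types (cg : nat -> gT * gT).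

Lemma grun_cons s w cg : grun (s :: w) cg = grun w (gstep cg s).
Proof. by []. Qed.

Lemma grun_orig w cg (o : nat -> gT) :
  (forall k, (cg k).1 = o k ^ (cg k).2) ->
  forall k, (grun w cg k).1 = orev w o k ^ (grun w cg k).2.
Proof.
elim: w cg o => [|[i b] w IH] cg o H //=.
apply: IH => k; rewrite /gstep /=; case: b; casek k i ki kSi;
  rewrite ?H ?conjgM //.
Qed.

Lemma grun_mem w cg (H : {group gT}) :
  (forall k, (cg k).1 \in H /\ (cg k).2 \in H) ->
  forall k, (grun w cg k).1 \in H /\ (grun w cg k).2 \in H.
Proof.
elim: w cg => [|[i b] w IH] cg Hc //=.
apply: IH => k; rewrite /gstep /=.
have [a1 a2] := Hc i; have [b1 b2] := Hc i.+1.
case: b => /=; casek k i ki kSi; try (by case: (Hc _)); split; rewrite ?groupJ ?groupM ?groupV //.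
Qed.

Fixpoint rp cg m := if m is m'.+1 then (cg m').1 * rp cg m' else 1.

Lemma rp_eq cg cg' m : (forall k, k < m -> (cg k).1 = (cg' k).1) ->
  rp cg m = rp cg' m.
Proof.
elim: m => //= m IH H; rewrite H // IH // => k km; apply: H; exact: ltnW.
Qed.

Lemma rp_gstep cg s m : s.1.+1 < m -> rp (gstep cg s) m = rp cg m.
Proof.
case: s => i b /=; elim: m => // m IH.
rewrite ltnS leq_eqVlt => /orP[/eqP <-|lt].
  clear IH; rewrite /= (@rp_eq (gstep cg (i, b)) cg i); last first.
    move=> k ki; rewrite /gstep /=; case: b => /=;
    by rewrite (ltn_eqF ki) (ltn_eqF (leqW ki : k < i.+1)).
  rewrite /gstep /=; case: b => /=; rewrite !eqxx ?(gtn_eqF (ltnSn i)) /=.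
    by rewrite conjgE !mulgA mulgV mul1g.
  by rewrite conjgE invgK !mulgA mulgKV.
rewrite /= IH //; congr (_ * _); clear IH.
rewrite /gstep /=; case: b => /=; by rewrite (gtn_eqF lt) (gtn_eqF (ltnW lt : i < m)).
Qed.

Lemma rp_grun n w cg : valid_braid n w -> rp (grun w cg) n.+1 = rp cg n.+1.
Proof.
elim: w cg => // [[i b] w IH] cg; rewrite grun_cons => /andP[lin vw].
by rewrite IH // rp_gstep.
Qed.

Fixpoint rpt cg m := if m is m'.+1 then (cg m).1 * rpt cg m' else 1.

Lemma rp_split cg m : rp cg m.+1 = rpt cg m * (cg 0).1.
Proof.
elim: m => [|m IH]; first by rewrite /= mulg1 mul1g.
have -> : rp cg m.+2 = (cg m.+1).1 * rp cg m.+1 by [].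
by rewrite IH mulgA.
Qed.

Lemma rpt_eq cg cg' m : (forall k, 0 < k <= m -> (cg k).1 = (cg' k).1) ->
  rpt cg m = rpt cg' m.
Proof.
elim: m => // m IH H.
have -> : rpt cg m.+1 = (cg m.+1).1 * rpt cg m by [].
have -> : rpt cg' m.+1 = (cg' m.+1).1 * rpt cg' m by [].
rewrite H ?leqnn // IH // => k /andP[k0 km]; apply: H.
by rewrite k0 leqW.
Qed.

Lemma grun_close0 n w cg : valid_braid n w ->
  (forall k, 0 < k <= n -> (grun w cg k).1 = (cg k).1) ->
  (grun w cg 0).1 = (cg 0).1.
Proof.
move=> vw H; have := rp_grun cg vw; rewrite !rp_split (rpt_eq H).
exact: mulgI.
Qed.

End GSide.

Definition ppstep (o : nat) (pp : nat -> nat) (s : crossing) : nat -> nat :=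
  let i := s.1 in
  if s.2 then fun k => if k == i then (pp i.+1).+1
                       else if k == i.+1 then pp i else pp k
  else fun k => if k == i then pp i.+1
                else if k == i.+1 then pp i + o.-1 else pp k.

Definition ppfold o w pp := foldl (ppstep o) pp w.

Lemma sum_ppstep o pp s m : s.1.+1 < m ->
  (\sum_(0 <= k < m) ppstep o pp s k =
   \sum_(0 <= k < m) pp k + (if s.2 then 1 else o.-1))%N.
Proof.
case: s => i b /=; elim: m => // m IH.
rewrite ltnS leq_eqVlt => /orP[/eqP <-|lt].
  clear IH; rewrite !big_nat_recr //=.
  rewrite (@eq_big_nat _ _ _ 0 i (ppstep o pp (i, b)) pp); last first.
    move=> k /andP[_ ki]; rewrite /ppstep /=; case: b => /=;
    by rewrite (ltn_eqF ki) (ltn_eqF (leqW ki : k < i.+1)).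
  rewrite /ppstep /=; case: b => /=; rewrite !eqxx ?(gtn_eqF (ltnSn i)) /=; lia.
rewrite !big_nat_recr //= IH //; clear IH.
rewrite /ppstep /=; case: b => /=; rewrite (gtn_eqF lt) (gtn_eqF (ltnW lt : i < m)); lia.
Qed.

Lemma sum_ppfold o n w pp : valid_braid n w ->
  (\sum_(0 <= k < n.+1) ppfold o w pp k =
   \sum_(0 <= k < n.+1) pp k + count (fun s => s.2) w
     + count (fun s => ~~ s.2) w * o.-1)%N.
Proof.
elim: w pp => [|[i b] w IH] pp /=; first by rewrite !addn0.
move=> /andP[lin vw]; rewrite /ppfold /= -/(ppfold o w _) IH //.
rewrite sum_ppstep //=; case: b => /=; lia.
Qed.

Section Count.
Variables (gT hT : finGroupType) (D : {group gT}) (nu : {morphism D >-> hT}) (X : hT).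

Lemma grun_count w (cg : nat -> gT * gT) pp :
  (forall k, [/\ (cg k).1 \in D, (cg k).2 \in D, nu (cg k).1 = X
                 & nu (cg k).2 = X ^+ pp k]) ->
  forall k, [/\ (grun w cg k).1 \in D, (grun w cg k).2 \in D,
                nu (grun w cg k).1 = X
              & nu (grun w cg k).2 = X ^+ ppfold #[X] w pp k].
Proof.
elim: w cg pp => [|[i b] w IH] cg pp Hc //.
rewrite grun_cons; apply: IH => k; rewrite /gstep /ppstep /=.
have [a1 a2 a3 a4] := Hc i; have [b1 b2 b3 b4] := Hc i.+1.
case: b => /=; casek k i ki kSi; try exact: Hc;
  split; rewrite ?groupJ ?groupM ?groupV ?morphJ ?morphM ?morphV ?groupV //;
  rewrite ?a3 ?a4 ?b3 ?b4 ?conjgE ?mulgA ?mulVg ?mul1g ?expgSr //.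
  by rewrite invgK mulgK.
by rewrite expgD -invg_expg.
Qed.
End Count.

Section QSide.
Variable Q : quandle.

Lemma RqE (a y : Q) : Rq a y = qop y a.
Proof. by rewrite /Rq permE. Qed.

Lemma qrdivK (a b : Q) : qop (qrdiv a b) b = a.
Proof. by rewrite /qrdiv -RqE permKV. Qed.

Lemma Rq_op (a b : Q) : Rq (qop a b) = Rq a ^ Rq b.
Proof.
apply/permP => z; rewrite conjgE !permM !RqE.
by rewrite qdist -/(qrdiv z b) qrdivK.
Qed.

Lemma Rq_div (a b : Q) : Rq (qrdiv a b) = Rq a ^ (Rq b)^-1.
Proof. by rewrite -{2}(qrdivK a b) Rq_op conjgK. Qed.

Lemma Rq_act_group :
  group_set [set g : {perm Q} | [forall a, Rq (g a) == Rq a ^ g]].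
Proof.
apply/group_setP; split.
  by rewrite inE; apply/forallP => a; rewrite perm1 conjg1.
move=> g h; rewrite !inE => /forallP Hg /forallP Hh; apply/forallP => a.
by rewrite permM (eqP (Hh _)) (eqP (Hg _)) conjgM.
Qed.

Lemma Rq_act g (a : Q) : g \in Inn Q -> Rq (g a) = Rq a ^ g.
Proof.
move=> gI; suff : g \in Group Rq_act_group by rewrite inE => /forallP/(_ a)/eqP.
apply: subsetP gI; rewrite /Inn gen_subG; apply/subsetP => r /imsetP[b _ ->].
by rewrite inE; apply/forallP => a'; rewrite RqE Rq_op.
Qed.

Lemma Rq_mem (a : Q) : Rq a \in Inn Q.
Proof. by rewrite /Inn mem_gen // imset_f. Qed.

Lemma qrun_cons w s (c : nat -> Q) : qrun (s :: w) c = qrun w (qstep c s).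
Proof. by []. Qed.

Lemma qrun_R w (cq : nat -> Q) (cg : nat -> {perm Q} * {perm Q}) :
  (forall k, (cg k).1 = Rq (cq k)) ->
  forall k, (grun w cg k).1 = Rq (qrun w cq k).
Proof.
elim: w cq cg => [|[i b] w IH] cq cg H1 //.
rewrite grun_cons qrun_cons; apply: IH => k; rewrite /gstep /qstep /=.
case: b => /=; casek k i ki kSi; by rewrite ?Rq_op ?Rq_div ?H1.
Qed.

Lemma qrun_orig w (cq : nat -> Q) (cg : nat -> {perm Q} * {perm Q}) (o : nat -> Q) :
  (forall k, (cg k).1 = Rq (cq k)) -> (forall k, cq k = (cg k).2 (o k)) ->
  forall k, qrun w cq k = (grun w cg k).2 (orev w o k).
Proof.
elim: w cq cg o => [|[i b] w IH] cq cg o H1 H2 //.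
rewrite grun_cons qrun_cons; apply: IH.
  move=> k; rewrite /gstep /qstep /=.
  case: b => /=; casek k i ki kSi; by rewrite ?Rq_op ?Rq_div ?H1.
move=> k; rewrite /gstep /qstep /=.
case: b => /=; casek k i ki kSi; rewrite ?permM -?H1 ?RqE -?H2 //.
  by rewrite H1 RqE.
by rewrite /qrdiv H1.
Qed.

End QSide.

Section Knot.
Variables (n : nat) (w : seq crossing).
Hypothesis Kw : is_knot_braid n w.

Definition pp_ k := iter k (bperm w) 0.
Definition ll := [seq pp_ k | k <- iota 0 n.+1].

Lemma vw : valid_braid n w.
Proof. by case/andP: Kw. Qed.

Lemma ul : uniq ll.
Proof. by case/andP: Kw. Qed.

Lemma pS k : pp_ k.+1 = bperm w (pp_ k).
Proof. by rewrite /pp_ iterS. Qed.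

Lemma p_le k : pp_ k <= n.
Proof. elim: k => // k IH; rewrite pS; exact: bperm_le vw IH. Qed.

Lemma size_ll : size ll = n.+1.
Proof. by rewrite size_map size_iota. Qed.

Lemma nth_ll k : k <= n -> nth 0 ll k = pp_ k.
Proof. by move=> kn; rewrite (nth_map 0) ?size_iota // nth_iota. Qed.

Lemma ll_mem j : j <= n -> j \in ll.
Proof.
move=> jn.
have sub : {subset ll <= iota 0 n.+1}.
  by move=> y /mapP[k _ ->]; rewrite mem_iota leq0n add0n ltnS p_le.
have sz : size (iota 0 n.+1) <= size ll by rewrite size_ll size_iota.
have [_ E] := @uniq_min_size _ ll (iota 0 n.+1) ul sub sz.
by rewrite E mem_iota.
Qed.

Lemma p_inj i j : i <= n -> j <= n -> pp_ i = pp_ j -> i = j.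
Proof.
move=> i_n j_n E; apply/eqP; rewrite -(nth_uniq 0 _ _ ul) ?size_ll //.
by rewrite !nth_ll // E.
Qed.

Lemma index_p k : k <= n -> index (pp_ k) ll = k.
Proof. by move=> kn; rewrite -(nth_ll kn) index_uniq ?size_ll ?ul. Qed.

Lemma index_le j : j <= n -> index j ll <= n.
Proof. by move=> jn; rewrite -ltnS -size_ll index_mem ll_mem. Qed.

Lemma p_index j : j <= n -> pp_ (index j ll) = j.
Proof. by move=> jn; rewrite -nth_ll ?index_le // nth_index // ll_mem. Qed.

Lemma p_n1 : pp_ n.+1 = 0.
Proof.
have := p_index (p_le n.+1); case E: (index (pp_ n.+1) ll) => [//|j].
move/esym; rewrite !pS => /bperm_inj /p_inj.
have := index_le (p_le n.+1); rewrite E => jn.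
by move=> /(_ (leqnn n) (ltnW jn)) nj; move: jn; rewrite nj ltnn.
Qed.

Lemma p_nz k : 0 < k <= n -> pp_ k != 0.
Proof.
case/andP=> k0 kn; apply/eqP => /(@p_inj k 0 kn (leq0n n)) E.
by move: k0; rewrite E.
Qed.

Lemma perm_pS : perm_eq [seq pp_ k.+1 | k <- iota 0 n.+1] (iota 0 n.+1).
Proof.
apply: uniq_perm; last first.
- move=> j; apply/mapP/idP => [[k _ ->]|]; first by rewrite mem_iota leq0n add0n ltnS p_le.
  rewrite mem_iota leq0n add0n ltnS => jn.
  case: (posnP j) => [->|j0]; first by exists n; [rewrite mem_iota leq0n add0n ltnSn | rewrite p_n1].
  have := p_index jn; case E: (index j ll) => [|m] pj.
    by move: j0; rewrite -pj.
  exists m; last by [].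
  by rewrite mem_iota leq0n add0n ltnS ltnW // -E index_le.
- exact: iota_uniq.
rewrite map_inj_in_uniq ?iota_uniq // => a b; rewrite !mem_iota !leq0n !add0n !ltnS.
by move=> an bn; rewrite !pS => /bperm_inj /p_inj; apply.
Qed.

End Knot.

Section Col.
Variables (Q : quandle) (e : Q) (n : nat) (w : seq crossing).
Hypothesis Kw : is_knot_braid n w.

Definition cqn (c : {ffun 'I_n.+1 -> Q}) : nat -> Q := fun k => c (inord k).
Definition outg (cg : {ffun 'I_n.+1 -> {perm Q}}) := grun w (ginit cg).
Definition hh cg k := (outg cg (pp_ w k.+1)).2.
Definition HH cg m := \prod_(k < m) hh cg k.
Definition Phi (c : {ffun 'I_n.+1 -> Q}) : {ffun 'I_n.+1 -> {perm Q}} :=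
  [ffun j => Rq (c j)].
Definition lift cg : {ffun 'I_n.+1 -> Q} :=
  [ffun j : 'I_n.+1 => HH cg (index (val j) (ll n w)) e].
Definition validQ (c : {ffun 'I_n.+1 -> Q}) :=
  (c ord0 == e) &&
  [forall j : 'I_n.+1, (j != ord0) ==> (qrun w (fun k => c (inord k)) j == c j)].

Lemma HH_S cg k : HH cg k.+1 = HH cg k * hh cg k.
Proof. by rewrite /HH big_ord_recr. Qed.

Lemma HH0 cg : HH cg 0 = 1.
Proof. by rewrite /HH big_ord0. Qed.

Lemma inord0 : (inord 0 : 'I_n.+1) = ord0.
Proof. by apply: val_inj; rewrite /= inordK. Qed.

Lemma inord_p k : nat_of_ord (inord (pp_ w k) : 'I_n.+1) = pp_ w k.
Proof. by rewrite inordK // ltnS p_le // vw. Qed.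

Lemma QR c k : qrun w (cqn c) (pp_ w k.+1) = hh (Phi c) k (cqn c (pp_ w k)).
Proof.
have := @qrun_orig Q w (cqn c) (ginit (Phi c)) (cqn c).
move=> /(_ _ _ (bperm w (pp_ w k))); rewrite orev_bperm -pS; apply.
  by move=> k'; rewrite /ginit ffunE.
by move=> k'; rewrite /ginit perm1.
Qed.

Lemma Q1 c : validQ c -> forall k, k <= n -> cqn c (pp_ w k) = HH (Phi c) k e.
Proof.
case/andP => /eqP c0 /forallP cl; elim => [_|k IH kn].
  by rewrite HH0 perm1 /cqn /pp_ /= inord0.
have jn0 : (inord (pp_ w k.+1) : 'I_n.+1) != ord0.
  apply/eqP => E; have := inord_p k.+1; rewrite E => /esym; apply/eqP.
  have := @p_nz n w Kw k.+1 kn. done.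

have := cl (inord (pp_ w k.+1)); rewrite jn0 implyTb inord_p => /eqP.
rewrite /cqn => <-; rewrite -/(cqn c) QR IH ?HH_S ?permM //.
exact: ltnW.
Qed.

Lemma Q2 c : validQ c -> qrun w (cqn c) 0 = HH (Phi c) n.+1 e.
Proof. by move=> vc; rewrite -(p_n1 Kw) QR Q1 // HH_S permM. Qed.

Lemma ord_le (j : 'I_n.+1) : j <= n.
Proof. by rewrite -ltnS. Qed.

Lemma Q3 c : validQ c -> c = lift (Phi c).
Proof.
move=> vc; apply/ffunP => j; rewrite ffunE -Q1 ?index_le ?ord_le //.
by rewrite p_index ?ord_le // /cqn inord_val.
Qed.

Definition Gcol (cg : {ffun 'I_n.+1 -> {perm Q}}) := is_Gcol (Inn Q) (Rq e) w cg.

Lemma G_mem cg : Gcol cg -> forall k, hh cg k \in Inn Q.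
Proof.
case/and3P => _ /forallP Hin _ k; rewrite /hh /outg.
have H : forall k', (ginit cg k').1 \in Inn Q /\ (ginit cg k').2 \in Inn Q.
  by move=> k'; rewrite /ginit /= group1 Hin.
by case: (grun_mem w H (pp_ w k.+1)).
Qed.

Lemma HH_mem cg : Gcol cg -> forall m, HH cg m \in Inn Q.
Proof. by move=> gc m; apply: group_prod => k _; exact: G_mem. Qed.

Lemma G1 cg : Gcol cg -> forall k, k <= n.+1 ->
  cg (inord (pp_ w k)) = Rq e ^ HH cg k.
Proof.
move=> gc; have := gc; case/and3P => /eqP c0 _ /forallP cl.
have orig := @grun_orig _ w (ginit cg) (fun k => cg (inord k)).
have {}orig : forall s, (grun w (ginit cg) (bperm w s)).1 =
                        cg (inord s) ^ (grun w (ginit cg) (bperm w s)).2.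
  by move=> s; rewrite orig ?orev_bperm // => k'; rewrite /ginit /= conjg1.
elim => [_|k IH kn]; first by rewrite HH0 conjg1 /pp_ /= inord0.
have := eqP (cl (inord (pp_ w k.+1))); rewrite inord_p => <-.
rewrite pS orig IH; last exact: ltnW.
by rewrite HH_S conjgM /hh /outg pS.
Qed.

Lemma G3 cg : Gcol cg -> Phi (lift cg) = cg.
Proof.
move=> gc; apply/ffunP => j; rewrite !ffunE Rq_act ?HH_mem // -G1 //.
  by rewrite p_index ?ord_le // inord_val.
exact: leqW (index_le Kw (ord_le j)).
Qed.

Lemma liftE cg (j : 'I_n.+1) : lift cg j = HH cg (index (nat_of_ord j) (ll n w)) e.
Proof. by rewrite ffunE. Qed.

Lemma index0 : index 0 (ll n w) = 0.
Proof. exact: (@index_p n w Kw 0). Qed.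

Lemma G4 cg : Gcol cg -> validQ (lift cg).
Proof.
move=> gc; apply/andP; split.
  by rewrite ffunE (_ : val (ord0 : 'I_n.+1) = 0) // index0 HH0 perm1.
apply/forallP => j; apply/implyP => jn0.
have jn := ord_le j.
have pj := p_index Kw jn.
have mle := index_le Kw jn.
case E: (index (nat_of_ord j) (ll n w)) pj mle => [|m] pj mle.
  by move: jn0; rewrite -val_eqE /= -pj.
rewrite -[X in qrun _ _ X]pj -/(cqn (lift cg)) QR G3 //.
by rewrite /cqn liftE inord_p index_p ?(ltnW mle) // liftE E HH_S permM.
Qed.

Lemma G5 cg : Gcol cg -> qrun w (cqn (lift cg)) 0 = HH cg n.+1 e.
Proof. by move=> gc; rewrite Q2 ?G3 // G4. Qed.

Lemma P1 c : validQ c -> Gcol (Phi c).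
Proof.
move=> vc; have := vc; case/andP => /eqP c0 /forallP cl.
have HR := @qrun_R Q w (cqn c) (ginit (Phi c)).
have {}HR : forall k, (grun w (ginit (Phi c)) k).1 = Rq (qrun w (cqn c) k).
  by apply: HR => k; rewrite /ginit /= ffunE.
apply/and3P; split.
- by rewrite ffunE c0.
- by apply/forallP => j; rewrite ffunE Rq_mem.
apply/forallP => j; apply/eqP.
case: (eqVneq j ord0) => [->|jn0]; last first.
  by rewrite HR ffunE; have := cl j; rewrite jn0 implyTb => /eqP ->.
rewrite (_ : nat_of_ord (ord0 : 'I_n.+1) = 0) // (grun_close0 (vw Kw)); first by rewrite /ginit /= inord0.
move=> k /andP[k0 kn]; rewrite HR /ginit /= ffunE.
have kn0 : (inord k : 'I_n.+1) != ord0 by rewrite -val_eqE /= inordK // -lt0n.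
have := cl (inord k); rewrite kn0 implyTb inordK // => /eqP ->.
by [].
Qed.

Definition Pc := count (fun s : crossing => s.2) w.
Definition Nc := count (fun s : crossing => ~~ s.2) w.

Lemma longE cg : longitude (Rq e) w cg = HH cg n.+1 * Rq e ^+ Nc * Rq e ^- Pc.
Proof. by []. Qed.

Lemma L_C cg : Gcol cg -> longitude (Rq e) w cg \in 'C_(Inn Q)[Rq e].
Proof.
move=> gc; rewrite longE inE; apply/andP; split.
  by rewrite !groupM ?groupV ?groupX ?HH_mem ?Rq_mem.
have fix1 : Rq e ^ HH cg n.+1 = Rq e by rewrite -G1 // (p_n1 Kw) inord0; case/and3P: gc => /eqP.
apply/cent1P; apply/commute_sym.
apply: commuteM; last by apply: commuteV; apply: commuteX.
apply: commuteM; last by apply: commuteX.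
by apply/commgP/conjg_fixP.
Qed.

Hypothesis conn : qconnected Q.

Lemma Inn_norm : Inn Q \subset 'N((Inn Q)^`(1)).
Proof. exact: der_norm. Qed.

Lemma cosetR a : coset (Inn Q)^`(1) (Rq a) = coset (Inn Q)^`(1) (Rq e).
Proof.
have : a \in orbit 'P (Inn Q) e by rewrite (atransP conn) ?inE.
case/orbitP => g gI <-; rewrite (_ : 'P%act e g = g e) // Rq_act // conjg_mulR.
have Ne : Rq e \in 'N((Inn Q)^`(1)) by apply: (subsetP Inn_norm); apply: Rq_mem.
have Nc : [~ Rq e, g] \in 'N((Inn Q)^`(1)).
  by apply: (subsetP Inn_norm); rewrite groupR ?Rq_mem.
rewrite coset_morphM // (@coset_id _ _ [~ Rq e, g]) ?mulg1 //.
by rewrite derg1; apply: mem_commg; rewrite ?Rq_mem.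
Qed.

Lemma prod_expg (hT : finGroupType) (X : hT) m (a : nat -> nat) :
  \prod_(k < m) X ^+ a k = X ^+ (\sum_(k < m) a k).
Proof.
elim: m => [|m IH]; first by rewrite !big_ord0.
by rewrite !big_ord_recr /= IH expgD.
Qed.

Lemma L_D cg : Gcol cg -> longitude (Rq e) w cg \in (Inn Q)^`(1).
Proof.
move=> gc; set H := (Inn Q)^`(1).
set X := coset H (Rq e).
have NI : forall g, g \in Inn Q -> g \in 'N(H) by apply/subsetP/Inn_norm.
have Hinit : forall k, [/\ (ginit cg k).1 \in 'N(H), (ginit cg k).2 \in 'N(H),
     coset H (ginit cg k).1 = X & coset H (ginit cg k).2 = X ^+ (fun _ => 0%N) k].
  move=> k; rewrite /ginit /= -(G3 gc) ffunE; split.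
  - by rewrite NI // Rq_mem.
  - by rewrite group1.
  - by rewrite /= cosetR.
  - by rewrite (morph1 (coset_morphism H)).
have Hk := @grun_count _ _ _ (coset_morphism H) X w (ginit cg) (fun _ => 0%N) Hinit.
set ppf := ppfold #[X] w (fun=> 0%N).
have hk : forall k, coset H (hh cg k) = X ^+ ppf (pp_ w k.+1).
  by move=> k; case: (Hk (pp_ w k.+1)).
have HHc : forall m, coset H (HH cg m) = X ^+ (\sum_(k < m) ppf (pp_ w k.+1)).
  elim=> [|m IH]; first by rewrite HH0 big_ord0 (morph1 (coset_morphism H)).
  rewrite HH_S coset_morphM ?NI ?HH_mem ?G_mem // IH hk big_ord_recr /= expgD.
  by [].
have Hs : (\sum_(k < n.+1) ppf (pp_ w k.+1) = \sum_(0 <= k < n.+1) ppf k)%N.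
  rewrite -(big_mkord xpredT (fun k => ppf (pp_ w k.+1))).
  rewrite -(big_map (fun k => pp_ w k.+1) xpredT ppf) /index_iota subn0.
  apply: perm_big; exact: perm_pS Kw.
have cV : forall y, y \in 'N(H) -> coset H y^-1 = (coset H y)^-1.
  by move=> y Ny; have := morphV (coset_morphism H) Ny.
have cX : forall y k, y \in 'N(H) -> coset H (y ^+ k) = (coset H y) ^+ k.
  by move=> y k Ny; have := morphX (coset_morphism H) k Ny.
have Ne : Rq e \in 'N(H) by rewrite NI ?Rq_mem.
apply: coset_idr; first by apply: NI; rewrite longE !groupM ?groupV ?groupX ?HH_mem ?Rq_mem.
rewrite longE !coset_morphM ?NI ?groupM ?groupV ?groupX ?HH_mem ?Rq_mem //.
rewrite cV ?groupX // !cX // HHc Hs (sum_ppfold _ _ (vw Kw)) big1 // add0n.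
rewrite -/X -expgD -addnA -mulnSr prednK ?order_gt0 // expgD mulnC expgM.
by rewrite expg_order expg1n mulg1 mulgV.
Qed.

Lemma fixq r : Rq r = Rq e -> forall k, (Rq e ^+ k) r = r.
Proof.
move=> Rr; elim=> [|k IH]; first by rewrite expg0 perm1.
by rewrite expgSr permM IH -Rr RqE qidem.
Qed.

Lemma longe cg : Gcol cg -> longitude (Rq e) w cg e = HH cg n.+1 e.
Proof.
move=> gc; have RH : Rq (HH cg n.+1 e) = Rq e.
  by rewrite Rq_act ?HH_mem // -G1 // (p_n1 Kw) inord0; case/and3P: gc => /eqP.
rewrite longE !permM fixq //.
by apply: (canLR (permK (Rq e ^+ Pc))); rewrite fixq.
Qed.

Lemma part1_sets q :
  [set cg | Gcol cg && (longitude (Rq e) w cg e == q)] =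
  Phi @: [set c | validQ c && (qrun w (cqn c) 0 == q)].
Proof.
apply/setP => cg; rewrite inE; apply/andP/imsetP.
  case=> gc /eqP lq; exists (lift cg); last by rewrite G3.
  by rewrite inE G4 // G5 // -longe // lq eqxx.
case=> c; rewrite inE => /andP[vc /eqP qc] ->.
have gc := P1 vc; split => //.
by rewrite longe // -(Q2 vc) qc.
Qed.

Lemma Phi_inj q : {in [set c | validQ c && (qrun w (cqn c) 0 == q)] &, injective Phi}.
Proof.
move=> c1 c2; rewrite !inE => /andP[v1 _] /andP[v2 _] E.
by rewrite (Q3 v1) (Q3 v2) E.
Qed.

End Col.

Lemma sum_card_part (A B : finType) (P : pred A) (L : A -> B) (F : pred B) :
  (\sum_(b | F b) #|[set a | P a && (L a == b)]| = #|[set a | P a && F (L a)]|)%N.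
Proof.
rewrite -sum1_card (partition_big L F) /=; last by move=> a; rewrite inE => /andP[].
apply: eq_bigr => b Fb; rewrite -sum1_card; apply: eq_bigl => a; rewrite !inE.
by case: eqP => [->|]; rewrite ?andbT ?andbF ?Fb //; case: (P a).
Qed.

Lemma part1 (Q : quandle) (e : Q) n w (Kw : is_knot_braid n w) (conn : qconnected Q) q :
  Psi_coeff n w e q =
  (\sum_(g in ('C_(Inn Q)[Rq e] :&: (Inn Q)^`(1))%g | g e == q)
      Pcoeff (Inn Q) (Rq e) n w g)%N.
Proof.
rewrite /Pcoeff (sum_card_part _ _ (fun g => (g \in ('C_(Inn Q)[Rq e] :&: (Inn Q)^`(1))) && (g e == q))).
rewrite (@eq_card _ _ [set cg | Gcol e w cg && (longitude (Rq e) w cg e == q)]); last first.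
  move=> cg; rewrite !in_set /Gcol; case gc: (is_Gcol _ _ _ _); last by [].
  have := L_C Kw gc; rewrite !in_set => /andP[-> ->]; by rewrite (L_D Kw conn gc).
rewrite part1_sets // card_in_imset; last exact: Phi_inj.
apply: eq_card => c; rewrite !inE /validQ andbA.
by [].
Qed.

Section GAlex.
Variables (Q : quandle) (G0 : finGroupType) (f : {perm G0}) (phi : Q -> G0)
  (phinv : G0 -> Q).
Hypotheses (fA : f \in Aut [set: G0]) (K1 : cancel phi phinv) (K2 : cancel phinv phi)
  (hom : forall a b : Q, phi (qop a b) = f (phi a * (phi b)^-1) * phi b).

Definition psi (t : {perm Q}) (y : G0) : G0 := phi (t (phinv y)).

Lemma psiM s t y : psi (s * t) y = psi t (psi s y).
Proof. by rewrite /psi permM K1. Qed.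

Lemma psi1 y : psi 1 y = y.
Proof. by rewrite /psi perm1 K2. Qed.

Lemma cycM a : a \in <[f]> -> forall x y, a (x * y) = a x * a y.
Proof.
move=> ac x y; have aA : a \in Aut [set: G0].
  by apply: (subsetP _ _ ac); rewrite cycle_subG.
by have /morphicP := Aut_morphic aA; apply; rewrite inE.
Qed.

Lemma cyc1 a : a \in <[f]> -> a 1 = 1.
Proof.
move=> ac; have h := cycM ac 1 1; rewrite mulg1 in h.
by apply: (@mulgI _ (a 1)); rewrite -h mulg1.
Qed.

Definition Aset := [set t : {perm Q} | [exists a in <[f]>,
   [forall y, psi t y == a y * psi t 1]]].
Definition Tset := [set t : {perm Q} | [forall y, psi t y == y * psi t 1]].

Lemma A_mul s t a b : a \in <[f]> -> b \in <[f]> ->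
  (forall y, psi s y = a y * psi s 1) -> (forall y, psi t y = b y * psi t 1) ->
  forall y, psi (s * t) y = (a * b) y * psi (s * t) 1.
Proof.
move=> ac bc Hs Ht y; rewrite !psiM Ht [in RHS]Ht Hs [in RHS]Hs !cycM //.
by rewrite (cyc1 ac) (cyc1 bc) mul1g permM !mulgA.
Qed.

Lemma Aset_group : group_set Aset.
Proof.
apply/group_setP; split.
  rewrite inE; apply/existsP; exists 1; rewrite group1 /=.
  by apply/forallP => y; rewrite !psi1 perm1 mulg1.
move=> s t; rewrite !inE => /exists_inP[a ac /forallP Hs] /exists_inP[b bc /forallP Ht].
apply/exists_inP; exists (a * b); first by rewrite groupM.
apply/forallP => y; apply/eqP; apply: A_mul => // z; exact/eqP.
Qed.

Lemma Tset_group : group_set Tset.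
Proof.
apply/group_setP; split.
  by rewrite inE; apply/forallP => y; rewrite !psi1 mulg1.
move=> s t; rewrite !inE => /forallP Hs /forallP Ht; apply/forallP => y.
have Ht' z := eqP (Ht z); have Hs' z := eqP (Hs z).
by rewrite !psiM (Ht' (psi s y)) (Ht' (psi s 1)) (Hs' y) mulgA.
Qed.

Lemma Inn_A : Inn Q \subset Group Aset_group.
Proof.
rewrite /Inn gen_subG; apply/subsetP => r /imsetP[b _ ->].
rewrite inE; apply/exists_inP; exists f; first exact: cycle_id.
apply/forallP => y; rewrite /psi !RqE !hom !K2 !cycM ?cycle_id //.
by rewrite cyc1 ?cycle_id // mul1g mulgA.
Qed.

Lemma same_part u v (c : G0 -> G0) :
  (forall y, psi u y = c y * psi u 1) -> (forall y, psi v y = c y * psi v 1) ->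
  v^-1 * u \in Tset.
Proof.
move=> Hu Hv; have key : forall y, psi (v^-1 * u) y = y * ((psi v 1)^-1 * psi u 1).
  move=> y; rewrite psiM Hu.
  have : psi v (psi v^-1 y) = y by rewrite -psiM mulVg psi1.
  by rewrite Hv => /(canRL (mulgK _)) ->; rewrite mulgA.
by rewrite inE; apply/forallP => y; rewrite !key mul1g.
Qed.

Lemma der_T : (Inn Q)^`(1) \subset Group Tset_group.
Proof.
rewrite derg1 gen_subG; apply/subsetP => z /imset2P[s t sI tI ->].
have /(subsetP Inn_A) := sI; rewrite inE => /exists_inP[a ac /forallP Hs].
have /(subsetP Inn_A) := tI; rewrite inE => /exists_inP[b bc /forallP Ht].
have Hs' : forall y, psi s y = a y * psi s 1 by move=> y; apply/eqP.
have Ht' : forall y, psi t y = b y * psi t 1 by move=> y; apply/eqP.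
have cab : a * b = b * a by apply: (centsP (cycle_abelian f)).
rewrite (_ : [~ s, t] = (t * s)^-1 * (s * t)); last by rewrite invMg commgEl conjgE !mulgA.
apply: (same_part (c := a * b)); first by apply: A_mul.
by rewrite cab; apply: A_mul.
Qed.

Lemma der_fix t (e : Q) : t \in (Inn Q)^`(1) -> t e = e -> t = 1.
Proof.
move=> /(subsetP der_T); rewrite inE => /forallP H te.
have H' : forall y, psi t y = y * psi t 1 by move=> y; apply/eqP.
have p1 : psi t 1 = 1.
  apply: (@mulgI _ (phi e)); rewrite mulg1 -H' /psi K1 te //.
apply/permP => a; rewrite perm1; apply: (can_inj K1).
by have := H' (phi a); rewrite p1 mulg1 /psi K1.
Qed.

Lemma S_inj (e : Q) :
  {in ('C_(Inn Q)[Rq e] :&: (Inn Q)^`(1)) &, injective (fun g : {perm Q} => g e)}.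
Proof.
move=> g1 g2; rewrite !in_setI => /andP[_ d1] /andP[_ d2] /= E.
apply/eqP; rewrite eq_mulgV1; apply/eqP; apply: (der_fix (e := e)).
  by rewrite groupM ?groupV.
by rewrite permM E permK.
Qed.
End GAlex.

Theorem mainTheorem8 (Q : quandle) (G0 : finGroupType) (f : {perm G0})
    (phi : Q -> G0) :
  f \in Aut [set: G0] ->
  bijective phi ->
  (forall a b : Q, phi (qop a b) = (f (phi a * (phi b)^-1) * phi b)%g) ->
  qconnected Q ->
  forall e : Q,
  let G := Inn Q in
  let x := Rq e in
  (forall (n : nat) (w : seq crossing), is_knot_braid n w ->
     forall q : Q,
       Psi_coeff n w e q =
       (\sum_(g in ('C_G[x] :&: G^`(1))%g | g e == q) Pcoeff G x n w g)%N)
  /\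
  (forall (n1 : nat) (w1 : seq crossing) (n2 : nat) (w2 : seq crossing),
     is_knot_braid n1 w1 -> is_knot_braid n2 w2 ->
     ((forall g, g \in ('C_G[x] :&: G^`(1))%g ->
                 Pcoeff G x n1 w1 g = Pcoeff G x n2 w2 g)
      <->
      (forall q : Q, Rq q = x -> Psi_coeff n1 w1 e q = Psi_coeff n2 w2 e q))).
Proof.
move=> fA [phinv K1 K2] hom conn e G x; split.
  by move=> n w Kw q; apply: part1.
move=> n1 w1 n2 w2 Kw1 Kw2; split.
  move=> HP q Rqx; rewrite (part1 _ Kw1) // (part1 _ Kw2) //.
  by apply: eq_bigr => g /andP[gS _]; apply: HP.
move=> HQ g gS.
have Rg : Rq (g e) = x.
  move: gS; rewrite in_setI => /andP[gC _]; move: gC; rewrite in_setI => /andP[gI gc].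
  rewrite Rq_act //; apply/conjg_fixP/commgP/commute_sym; exact/cent1P.
have := HQ (g e) Rg; rewrite (part1 _ Kw1) // (part1 _ Kw2) //.
have P1 : forall g', (g' \in ('C_G[x] :&: G^`(1))%g) && (g' e == g e) = (g' == g).
  move=> g'; apply/andP/eqP => [[g'S /eqP E]|->]; last by rewrite eqxx.
  exact: (S_inj fA K1 K2 hom g'S gS E).
by rewrite !(big_pred1 g P1).
Qed.
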